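(* Let $n\ge1$, let $\gamma,\beta$ be proper $3$-colorings of the $2\times n$ grid graph $M^*_{2,n}$, let $H$ be an integer, and set $y_{i,j}=H+h_{\gamma,v_{1,1}}(\beta,v_{i,j})$ for $i\in\{1,2\}$, $1\le j\le n$. When the multiset $Y=\{y_{i,j}\}$ is listed from lowest to highest, any two consecutive values differ by $0$ or $2$.
   Context: $M^*_{2,n}$ is the grid graph with vertices $v_{i,j}$ ($i\in\{1,2\}$, $1\le j\le n$), $v_{i,j}$ adjacent to $v_{i,j\pm1}$ and $v_{3-i,j}$. Colors lie in $\mathbb{Z}_3$. For a proper $3$-coloring $\gamma$ and an edge traversed from $a$ to $b$, its weight $w(\gamma,\overrightarrow{ab})\in\{1,-1\}$ is congruent to $\gamma(b)-\gamma(a)$ mod $3$; the weight $w(\gamma,P)$ of a directed path is the sum of its edge weights. For any proper $3$-coloring the weight of a directed path from $u$ to $v$ depends only on $u,v$. The relative height is $h_{\gamma,u}(\beta,v)=w(\beta,P_{u,v})-w(\gamma,P_{u,v})$ for any directed path $P_{u,v}$ from $u$ to $v$. *)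

(* Defs.v *)
From mathcomp Require Import all_boot all_order all_algebra.
Set Implicit Arguments. Unset Strict Implicit. Unset Printing Implicit Defensive.
Import Order.TTheory GRing.Theory Num.Theory.
Local Open Scope ring_scope.

(* Vertices of M*_{2,n}: v_{i,j} is (i-1, j-1) : 'I_2 * 'I_n (0-based). *)
Notation gvert n := ('I_2 * 'I_n)%type.

Definition gadj (n : nat) (a b : gvert n) : bool :=
  ((a.1 == b.1) && (((a.2 : nat) == (b.2 : nat).+1) || ((b.2 : nat) == (a.2 : nat).+1)))
  || ((a.1 != b.1) && (a.2 == b.2)).

Definition coloring (n : nat) := gvert n -> 'Z_3.

Definition proper3 (n : nat) (c : coloring n) : Prop :=
  forall a b : gvert n, gadj a b -> c a != c b.

(* weight of the directed edge a -> b: the element of {1,-1} congruent to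
   c(b) - c(a) mod 3 (for a proper coloring this difference is 1 or 2 = -1). *)
Definition eweight (n : nat) (c : coloring n) (a b : gvert n) : int :=
  if c b - c a == 1 then 1 else -1.

Definition pweight (n : nat) (c : coloring n) (p : seq (gvert n)) : int :=
  \sum_(e <- zip p (behead p)) eweight c e.1 e.2.

(* a specific directed path from v_{1,1} to v = v_{i,j}: along the first row
   from column 1 to column j, then (if i = 2) down to v_{2,j}. *)
Definition cpath (n : nat) (v : gvert n) : seq (gvert n) :=
  map (fun k : 'I_n => (ord0 : 'I_2, k))
      (filter (fun k : 'I_n => (k <= v.2)%N) (enum 'I_n))
  ++ (if v.1 == ord0 then [::] else [:: v]).

Definition relheight (n : nat) (gamma beta : coloring n) (v : gvert n) : int :=
  pweight beta (cpath v) - pweight gamma (cpath v).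

(* Main.v *)
Require Import Defs.
From mathcomp Require Import all_boot all_order all_algebra.
From mathcomp Require Import zify.
Set Implicit Arguments. Unset Strict Implicit.
Import Order.TTheory GRing.Theory Num.Theory.
Local Open Scope ring_scope.

Definition o1 : 'I_2 := @Ordinal 2 1 isT.
Definition gv (m : nat) (k : nat) : gvert m.+1 := (ord0, inord k).

Lemma pweight_cons2 n (c : coloring n) x y r :
  pweight c (x :: y :: r) = eweight c x y + pweight c (y :: r).
Proof. by rewrite /pweight /= big_cons. Qed.

Lemma pweight1 n (c : coloring n) x : pweight c [:: x] = 0.
Proof. by rewrite /pweight /= big_nil. Qed.

Lemma pweight_rcons n (c : coloring n) x q z :
  pweight c (rcons (x :: q) z) = pweight c (x :: q) + eweight c (last x q) z.
Proof.
elim: q x => [|y q IH] x /=.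
  by rewrite pweight_cons2 !pweight1 add0r addr0.
by rewrite !pweight_cons2 -rcons_cons IH addrA.
Qed.

Lemma iota_rcons1 j : iota 1 j.+1 = rcons (iota 1 j) j.+1.
Proof. by rewrite -cats1 -(addn1 j) iotaD add1n addn1. Qed.

Lemma last_iota j : last 0%N (iota 1 j) = j.
Proof. by case: j => // j; rewrite iota_rcons1 last_rcons. Qed.

Lemma filter_ord m (j : 'I_m.+1) :
  filter (fun k : 'I_m.+1 => (k <= j)%N) (enum 'I_m.+1) = map inord (iota 0 j.+1).
Proof.
apply: (inj_map val_inj).
transitivity (filter (fun k : nat => (k <= j)%N) (map val (enum 'I_m.+1))).
  by rewrite filter_map.
rewrite val_enum_ord -map_comp.
have -> : map (val \o @inord m) (iota 0 j.+1) = iota 0 j.+1.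
  transitivity (map id (iota 0 j.+1)); last by rewrite map_id.
  apply/eq_in_map => x; rewrite mem_iota /= => hx.
  apply: inordK; have := ltn_ord j. lia.
have e : iota 0 m.+1 = iota 0 j.+1 ++ iota j.+1 (m.+1 - j.+1).
  by rewrite -iotaD; congr iota; have := ltn_ord j; lia.
rewrite e filter_cat.
rewrite (@eq_in_filter _ _ predT (iota 0 j.+1)); last first.
  by move=> x; rewrite mem_iota /= => hx; lia.
rewrite (@eq_in_filter _ _ pred0 (iota j.+1 _)); last first.
  by move=> x; rewrite mem_iota /= => hx; lia.
by rewrite filter_predT filter_pred0 cats0.
Qed.

Lemma cpath_g m j : (j <= m)%N -> cpath (gv m j) = gv m 0 :: map (gv m) (iota 1 j).
Proof.
move=> hj; rewrite /cpath /= filter_ord ?eqxx cats0 -map_comp inordK //.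
Qed.

Lemma cpath_c m j : (j <= m)%N ->
  cpath (o1, (inord j : 'I_m.+1)) = rcons (gv m 0 :: map (gv m) (iota 1 j)) (o1, inord j).
Proof.
move=> hj; rewrite /cpath /= filter_ord -map_comp inordK // cats1 //.
Qed.

Lemma pw_row m (c : coloring m.+1) j : (j < m)%N ->
  pweight c (cpath (gv m j.+1)) = pweight c (cpath (gv m j)) + eweight c (gv m j) (gv m j.+1).
Proof.
move=> hj; rewrite cpath_g // cpath_g 1?ltnW // iota_rcons1 map_rcons -rcons_cons.
by rewrite pweight_rcons last_map last_iota.
Qed.

Lemma pw_col m (c : coloring m.+1) j : (j <= m)%N ->
  pweight c (cpath (o1, (inord j : 'I_m.+1))) =
  pweight c (cpath (gv m j)) + eweight c (gv m j) (o1, inord j).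
Proof.
move=> hj; rewrite cpath_c // cpath_g //.
by rewrite pweight_rcons last_map last_iota.
Qed.

Lemma ew_pm n (c : coloring n) a b : eweight c a b = 1 \/ eweight c a b = -1.
Proof. by rewrite /eweight; case: ifP; auto. Qed.

Lemma rh_row m (ga be : coloring m.+1) j : (j < m)%N ->
  let d := relheight ga be (gv m j.+1) - relheight ga be (gv m j) in
  d = 2 \/ d = 0 \/ d = -2.
Proof.
move=> hj /=; rewrite /relheight !pw_row //.
case: (ew_pm be (gv m j) (gv m j.+1)) => ->;
case: (ew_pm ga (gv m j) (gv m j.+1)) => ->; lia.
Qed.

Lemma rh_col m (ga be : coloring m.+1) j : (j <= m)%N ->
  let d := relheight ga be (o1, (inord j : 'I_m.+1)) - relheight ga be (gv m j) in
  d = 2 \/ d = 0 \/ d = -2.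
Proof.
move=> hj /=; rewrite /relheight !pw_col //.
case: (ew_pm be (gv m j) (o1, inord j)) => ->;
case: (ew_pm ga (gv m j) (o1, inord j)) => ->; lia.
Qed.

Lemma rh0 m (ga be : coloring m.+1) : relheight ga be (gv m 0) = 0.
Proof. by rewrite /relheight cpath_g // !pweight1 subrr. Qed.

Lemma vcases m (v : gvert m.+1) : v = gv m v.2 \/ v = (o1, inord v.2).
Proof.
case: v => i k; rewrite /gv inord_val /=.
case: i => [[|[|i]] hi]; [left|right|by []]; congr pair; exact: val_inj.
Qed.

Lemma ev_all m (ga be : coloring m.+1) v : exists t : int, relheight ga be v = 2 * t.
Proof.
have row : forall j, (j <= m)%N -> exists t : int, relheight ga be (gv m j) = 2 * t.
  elim=> [|j IH] hj; first by exists 0; rewrite rh0.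
  have [t ht] := IH (ltnW hj).
  have := rh_row ga be hj; rewrite /= ht => h.
  case: h => [h|[h|h]]; [exists (t + 1)|exists t|exists (t - 1)]; lia.
have hv2 : (v.2 <= m)%N by have := ltn_ord v.2; lia.
case: (vcases v) => ->; first exact: row.
have [t ht] := row _ hv2.
have := rh_col ga be hv2; rewrite /= ht => h.
case: h => [h|[h|h]]; [exists (t + 1)|exists t|exists (t - 1)]; lia.
Qed.

Theorem lemma5p6 (n : nat) (hn : (1 <= n)%N) (gamma beta : coloring n)
  (hg : proper3 gamma) (hb : proper3 beta) (H : int) :
  let Y := sort (fun x y : int => x <= y)
             [seq H + relheight gamma beta v | v <- enum {: gvert n}] in
  forall k : nat, (k.+1 < size Y)%N ->
    (nth 0 Y k.+1 - nth 0 Y k = 0) \/ (nth 0 Y k.+1 - nth 0 Y k = 2).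
Proof.
case: n hn gamma beta hg hb => // m _ gamma beta _ _ Y k hk.
set y := fun v => H + relheight gamma beta v.
have sY : sorted (fun x y : int => x <= y) Y by apply: sort_sorted; exact: le_total.
have pY : perm_eq Y (map y (enum {: gvert m.+1})) by rewrite /Y perm_sort.
have memY : forall x, x \in Y -> exists v, x = y v.
  move=> x; rewrite (perm_mem pY) => /mapP [v _ ->]; by exists v.
have yinY v : y v \in Y by rewrite (perm_mem pY) map_f ?mem_enum.
have tr : transitive (fun x y : int => x <= y) by move=> ? ? ?; exact: le_trans.
have rf : reflexive (fun x y : int => x <= y) by move=> ?; exact: lexx.
have le_nth : forall i j, (i <= j)%N -> (j < size Y)%N -> nth 0 Y i <= nth 0 Y j.
  move=> i j hij hj; apply: (sorted_leq_nth tr rf 0 sY) => //; rewrite inE //.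
  exact: leq_ltn_trans hij hj.
set a := nth 0 Y k; set b := nth 0 Y k.+1.
have hab : a <= b by apply: le_nth.
have X : forall v, y v <= a \/ b <= y v.
  move=> v; have := yinY v; rewrite -index_mem => hi.
  rewrite -(nth_index 0 (yinY v)).
  case: (leqP (index (y v) Y) k) => h; [left|right]; apply: le_nth => //.
  exact: ltnW.
have [va ha] : exists v, a = y v by apply: memY; apply: mem_nth; exact: ltnW.
have [vb hb'] : exists v, b = y v by apply: memY; apply: mem_nth.
have [ta hta] := ev_all gamma beta va.
have [tb htb] := ev_all gamma beta vb.
have : b - a = 0 \/ b - a = 2 \/ 4 <= b - a.
  move: hab; rewrite ha hb' /y hta htb; lia.
case => [|[|h4]]; [by left|by right|exfalso].
have adj : forall u w, (let d := relheight gamma beta w - relheight gamma beta u in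
   d = 2 \/ d = 0 \/ d = -2) -> (y u <= a) = (y w <= a).
  move=> u w /= h; rewrite /y.
  case: (X u) (X w); rewrite /y => hu hw; apply/idP/idP => ?; lia.
have row : forall j, (j <= m)%N -> (y (gv m j) <= a) = (y (gv m 0) <= a).
  elim=> [|j IH] hj //.
  by rewrite -(IH (ltnW hj)); symmetry; apply: adj; apply: rh_row.
have all v : (y v <= a) = (y (gv m 0) <= a).
  have hv2 : (v.2 <= m)%N by have := ltn_ord v.2; lia.
  case: (vcases v) => ->; first exact: row.
  by rewrite -(row _ hv2); symmetry; apply: adj; apply: rh_col.
have e1 := all va; have e2 := all vb; rewrite -ha in e1; rewrite -hb' in e2.
rewrite lexx in e1; rewrite -e1 in e2.
have : b <= a by rewrite e2.
lia.
Qed.
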